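(* Let $M$ be a finite matroid having at least one circuit, and let $\ell$ be the size of its largest circuit. Then $\mathrm{bd}(M)\le\ell^2$.
   Context: For a rooted tree $T$, $\|T\|$ is its number of edges and its depth is the number of edges of a longest root-to-leaf path. A depth-decomposition of a finite matroid $M$ (rank function $r$) is a pair $(T,f)$ with $T$ a rooted tree and $f:M\to V(T)$ such that (1) $r(M)=\|T\|$ and (2) $r(X)\le\|T^*(X)\|$ for every $X\subseteq M$, where $T^*(X)$ is the union of the paths from the root to all vertices of $f(X)$. The branch-depth $\mathrm{bd}(M)$ is the minimum depth of $T$ over all depth-decompositions $(T,f)$ of $M$. *)

(* Defs.v *)
From mathcomp Require Import all_boot.
Set Implicit Arguments. Unset Strict Implicit. Unset Printing Implicit Defensive.

Definition is_matroid_rank (T : finType) (r : {set T} -> nat) : Prop :=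
  [/\ forall X : {set T}, r X <= #|X|,
      forall X Y : {set T}, X \subset Y -> r X <= r Y
    & forall X Y : {set T}, r (X :|: Y) + r (X :&: Y) <= r X + r Y].

Definition is_circuit (T : finType) (r : {set T} -> nat) (C : {set T}) : bool :=
  (r C < #|C|) && [forall D : {set T}, (D \proper C) ==> (r D == #|D|)].

Definition max_circuit_size (T : finType) (r : {set T} -> nat) : nat :=
  \max_(C : {set T} | is_circuit r C) #|C|.

(* A rooted tree on the finite vertex type V, given by a root and a parent
   map: parent root = root and every vertex reaches the root. The edges are
   {v, parent v} for v <> root. *)
Definition is_rooted_tree (V : finType) (root : V) (parent : V -> V) : Prop :=
  parent root = root /\ forall v : V, iter #|V| parent v = root.

Definition tree_edges (V : finType) : nat := #|V|.-1.

Definition dist_root (V : finType) (root : V) (parent : V -> V) (v : V) : nat :=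
  find (fun k => iter k parent v == root) (iota 0 #|V|.+1).

Definition tree_depth (V : finType) (root : V) (parent : V -> V) : nat :=
  \max_(v : V) dist_root root parent v.

Definition on_root_path (V : finType) (parent : V -> V) (u v : V) : bool :=
  [exists k : 'I_#|V|.+1, iter k parent v == u].

(* ||T^*(X)|| : number of edges of the union of the root-to-f(x) paths,
   i.e. the number of non-root vertices lying on such a path. *)
Definition Tstar_edges (T V : finType) (root : V) (parent : V -> V)
    (f : T -> V) (X : {set T}) : nat :=
  #|[set u : V | (u != root) && [exists x in X, on_root_path parent u (f x)]]|.

Definition is_depth_decomposition (T V : finType) (r : {set T} -> nat)
    (root : V) (parent : V -> V) (f : T -> V) : Prop :=
  [/\ is_rooted_tree root parent,
      r [set: T] = tree_edges V
    & forall X : {set T}, r X <= Tstar_edges root parent f X].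

Definition branch_depth_le (T : finType) (r : {set T} -> nat) (k : nat) : Prop :=
  exists (V : finType) (root : V) (parent : V -> V) (f : T -> V),
    is_depth_decomposition r root parent f /\ tree_depth root parent <= k.

(* Main.v *)
Require Import Defs.
From mathcomp Require Import all_boot zify.
Set Implicit Arguments. Unset Strict Implicit. Unset Printing Implicit Defensive.
Module M2.

Section Mat.
Variable T : finType.
Variable r : {set T} -> nat.
Hypothesis hr : is_matroid_rank r.
Implicit Types X Y I C D W A B Z : {set T}.

Lemma rle X : r X <= #|X|.
Proof. by case: hr. Qed.
Lemma rmono X Y : X \subset Y -> r X <= r Y.
Proof. by case: hr => _ H _; apply: H. Qed.
Lemma rsub X Y : r (X :|: Y) + r (X :&: Y) <= r X + r Y.
Proof. by case: hr => _ _ H; apply: H. Qed.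
Lemma r0 : r set0 = 0.
Proof. by have := rle set0; rewrite cards0; case: (r set0). Qed.
Lemma rU X Y : r (X :|: Y) <= r X + r Y.
Proof. have := rsub X Y; lia. Qed.

Lemma rD X Y : Y \subset X -> r X <= r Y + #|X :\: Y|.
Proof.
move=> sYX; have E : X = Y :|: (X :\: Y) by rewrite -{1}(setID X Y) (setIidPr sYX).
have := rU Y (X :\: Y); have := rle (X :\: Y); rewrite -E.
lia.
Qed.

Lemma indep_sub X Y : Y \subset X -> r X = #|X| -> r Y = #|Y|.
Proof.
move=> sYX hX; have := rD sYX; have := rle Y; have := cardsID Y X.
have -> : X :&: Y = Y by apply/setIidPr.
lia.
Qed.

Lemma max_indep X : exists I, [/\ I \subset X, r I = #|I| & r I = r X].
Proof.
move: {2}#|X| (leqnn #|X|) => n; elim: n X => [|n IH] X hX.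
  have X0 : X = set0 by apply/eqP; rewrite -cards_eq0; lia.
  by exists set0; rewrite X0 r0 cards0 sub0set.
case: (set_0Vmem X) => [->|[x xX]]; first by exists set0; rewrite r0 cards0 sub0set.
have hX' : #|X :\ x| <= n by move: hX; rewrite (cardsD1 x X) xX; lia.
have [I [sI hI eI]] := IH _ hX'.
have rXx : r X <= (r (X :\ x)).+1.
  have := rD (subD1set X x); have -> : X :\: (X :\ x) = [set x].
    by apply/setP=> y; rewrite !inE; case: (y =P x) => [->|_] /=; rewrite ?xX //; case: (y \in X).
  by rewrite cards1; lia.
have rXx' : r (X :\ x) <= r X by apply: rmono; apply: subD1set.
case: (ltngtP (r (X :\ x)) (r X)) => h; last first.
- by exists I; split; [exact: (subset_trans sI (subD1set X x)) | exact: hI | rewrite eI h].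
- lia.
have xI : x \notin I by apply/negP => /(subsetP sI); rewrite !inE eqxx.
exists (x |: I); split.
- by rewrite subUset sub1set xX (subset_trans sI) // subD1set.
- apply/eqP; rewrite eqn_leq rle cardsU1 xI /=.
  have := rsub (X :\ x) (x |: I).
  have -> : (X :\ x) :|: (x |: I) = X.
    apply/setP => y; rewrite !inE; have := subsetP sI y; rewrite !inE.
    case: (y =P x) => [->|_]; rewrite ?xX ?(negbTE xI) //=; by case: (y \in I); case: (y \in X) => //= /(_ isT).
  have -> : (X :\ x) :&: (x |: I) = I.
    apply/setP => y; rewrite !inE; have := subsetP sI y; rewrite !inE.
    case: (y =P x) => [->|_]; rewrite ?xX ?(negbTE xI) //=; by case: (y \in I); case: (y \in X) => //= /(_ isT).
  lia.
- apply/eqP; rewrite eqn_leq rmono ?andbT; last by rewrite subUset sub1set xX (subset_trans sI) // subD1set.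
  have := rsub (X :\ x) (x |: I).
  have -> : (X :\ x) :|: (x |: I) = X.
    apply/setP => y; rewrite !inE; have := subsetP sI y; rewrite !inE.
    case: (y =P x) => [->|_]; rewrite ?xX ?(negbTE xI) //=; by case: (y \in I); case: (y \in X) => //= /(_ isT).
  have -> : (X :\ x) :&: (x |: I) = I.
    apply/setP => y; rewrite !inE; have := subsetP sI y; rewrite !inE.
    case: (y =P x) => [->|_]; rewrite ?xX ?(negbTE xI) //=; by case: (y \in I); case: (y \in X) => //= /(_ isT).
  lia.
Qed.


Lemma circP C : is_circuit r C -> r C < #|C| /\ forall D, D \proper C -> r D = #|D|.
Proof.
case/andP => h /forallP H; split => // D DC; by have /implyP/(_ DC)/eqP := H D.
Qed.

Lemma dep_circuit X : r X < #|X| -> exists2 C : {set T}, C \subset X & is_circuit r C.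
Proof.
move: {2}#|X| (leqnn #|X|) => n; elim: n X => [|n IH] X hX dX.
  lia.
case: (boolP [forall D : {set T}, (D \proper X) ==> (r D == #|D|)]) => H.
  by exists X => //; rewrite /is_circuit dX H.
move/forallPn: H => [D]; rewrite negb_imply => /andP [DX /eqP nD].
have dD : r D < #|D| by have := rle D; lia.
have cD : #|D| <= n by move: DX; rewrite properEcard => /andP [_]; lia.
have [C CD cC] := IH D cD dD; exists C => //.
by apply: subset_trans CD (proper_sub DX).
Qed.

Lemma circ_rank C : is_circuit r C -> r C = #|C|.-1 /\ 0 < #|C|.
Proof.
move=> cC; have [h H] := circP cC.
have n0 : 0 < #|C| by lia.
case/card_gt0P: n0 => x xC.
have := H (C :\ x) (properD1 xC); have := cardsD1 x C; rewrite xC /=.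
have := rmono (subD1set C x); lia.
Qed.

Lemma circ_eq C D : is_circuit r C -> is_circuit r D -> C \subset D -> C = D.
Proof.
move=> cC cD sCD; apply/eqP; rewrite eqEproper sCD /=; apply/negP => pCD.
have [h _] := circP cC; have [_ H] := circP cD; have := H _ pCD; lia.
Qed.

Lemma closure C e Y : is_circuit r C -> e \in C -> C :\ e \subset Y -> r (e |: Y) = r Y.
Proof.
move=> cC eC sCY; apply/eqP; rewrite eqn_leq [r Y <= _]rmono ?subsetUr // andbT.
have [h H] := circP cC.
have := rsub Y C.
have : r (C :\ e) <= r (Y :&: C) by apply: rmono; rewrite subsetI sCY subD1set.
have := H _ (properD1 eC); have := cardsD1 e C; rewrite eC /=.
have : r (e |: Y) <= r (Y :|: C) by apply: rmono; rewrite subUset sub1set !inE eC orbT subsetUl.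
lia.
Qed.

Lemma coloop Y f : f \in Y -> r (Y :\ f) = r Y ->
  exists C : {set T}, [/\ is_circuit r C, f \in C & C \subset Y].
Proof.
move=> fY e.
have [I [sI hI eI]] := max_indep (Y :\ f).
have fI : f \notin I by apply/negP => /(subsetP sI); rewrite !inE eqxx.
have dI : r (f |: I) < #|f |: I|.
  rewrite cardsU1 fI; have : r (f |: I) <= r Y.
    by apply: rmono; rewrite subUset sub1set fY (subset_trans sI) // subD1set.
  lia.
have [C sC cC] := dep_circuit dI.
exists C; split => //; last first.
  by apply: subset_trans sC _; rewrite subUset sub1set fY (subset_trans sI) // subD1set.
apply/negPn/negP => fC.
have sCI : C \subset I.
  apply/subsetP => y yC; have := subsetP sC y yC; rewrite !inE; case/orP => // /eqP yf.
  by move: fC; rewrite -yf yC.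
have := indep_sub sCI hI; have [h _] := circP cC; lia.
Qed.

Lemma strong_elim C1 C2 e f : is_circuit r C1 -> is_circuit r C2 ->
  e \in C1 -> e \in C2 -> f \in C1 -> f \notin C2 ->
  exists C3 : {set T}, [/\ is_circuit r C3, f \in C3 & C3 \subset (C1 :|: C2) :\ e].
Proof.
move=> c1 c2 e1 e2 f1 f2.
set S := C1 :|: C2.
have fe : f != e by apply/eqP => fe; move: f2; rewrite fe e2.
have fY : f \in S :\ e by rewrite !inE fe f1.
apply: coloop => //.
have h1 : r (S :\ f) = r ((S :\ e) :\ f).
  have -> : S :\ f = e |: ((S :\ e) :\ f).
    apply/setP => y; rewrite !inE; case: (y =P e) => [->|_] /=.
      by rewrite (eq_sym e f) fe e2 orbT.
    by [].
  apply: closure c2 e2 _.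
  apply/subsetP => y; rewrite !inE => /andP [ye yC2]; rewrite ye yC2 orbT /=.
  have yf : y != f by apply/eqP => yf; move: f2; rewrite -yf yC2.
  by rewrite yf.
have h2 : r S = r (S :\ f).
  rewrite -{1}(setD1K (_ : f \in S)); last by rewrite !inE f1.
  apply: closure c1 f1 _.
  apply/subsetP => y; rewrite !inE => /andP [-> ->] //.
have := rmono (subD1set S e); have := rmono (subD1set (S :\ e) f).
lia.
Qed.

Lemma two_circ C1 C2 : is_circuit r C1 -> is_circuit r C2 -> C1 != C2 ->
  r (C1 :|: C2) + 2 <= #|C1 :|: C2|.
Proof.
move=> c1 c2 ne.
have p : C1 :&: C2 \proper C1.
  rewrite properEneq subsetIl andbT; apply/negP => /eqP E.
  have s : C1 \subset C2 by rewrite -E subsetIr.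
  by move: ne; rewrite (circ_eq c1 c2 s) eqxx.
have [_ H] := circP c1.
have := H _ p; have := rsub C1 C2; have := cardsUI C1 C2.
have [a1 b1] := circ_rank c1; have [a2 b2] := circ_rank c2.
lia.
Qed.

Lemma null_mono X Y : X \subset Y -> r Y + #|X| <= r X + #|Y|.
Proof.
move=> s; have := rD s; have := cardsID X Y.
have -> : Y :&: X = X by apply/setIidPr.
lia.
Qed.

Lemma sep_le A B : A :&: B = set0 ->
  (forall W, is_circuit r W -> W \subset A :|: B -> W \subset A \/ W \subset B) ->
  r A + r B <= r (A :|: B).
Proof.
move=> d H.
have [I [sI hI eI]] := max_indep A; have [J [sJ hJ eJ]] := max_indep B.
have dIJ : I :&: J = set0.
  apply/setP => y; rewrite !inE; apply/negP => /andP [yI yJ].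
  by move/setP: d => /(_ y); rewrite !inE (subsetP sI _ yI) (subsetP sJ _ yJ).
have iIJ : r (I :|: J) = #|I :|: J|.
  apply/eqP; rewrite eqn_leq rle /=; rewrite leqNgt; apply/negP => dd.
  have [W sW cW] := dep_circuit dd.
  have [a1 _] := circP cW.
  have sWAB : W \subset A :|: B by apply: subset_trans sW _; apply: setUSS.
  case: (H W cW sWAB) => sWA.
    have : W \subset I.
      apply/subsetP => y yW; have := subsetP sW y yW; rewrite inE; case/orP => // yJ.
      by move/setP: d => /(_ y); rewrite !inE (subsetP sWA _ yW) (subsetP sJ _ yJ).
    move/indep_sub => /(_ hI); lia.
  have : W \subset J.
    apply/subsetP => y yW; have := subsetP sW y yW; rewrite inE; case/orP => // yI.
    by move/setP: d => /(_ y); rewrite !inE (subsetP sWA _ yW) (subsetP sI _ yI).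
  move/indep_sub => /(_ hJ); lia.
have := cardsUI I J; rewrite dIJ cards0.
have : r (I :|: J) <= r (A :|: B) by apply: rmono; apply: setUSS.
lia.
Qed.

Lemma skew_sub A B X Y : A :&: B = set0 -> r (A :|: B) = r A + r B ->
  X \subset A -> Y \subset B -> r X + r Y <= r (X :|: Y).
Proof.
move=> d e sX sY.
have h1 := rsub A (X :|: Y).
have E1 : A :&: (X :|: Y) = X.
  apply/setP => y; rewrite !inE; case yX: (y \in X); first by rewrite (subsetP sX _ yX).
  case yY: (y \in Y); last by rewrite andbF.
  by move/setP: d => /(_ y); rewrite !inE (subsetP sY _ yY) andbT => ->.
have h2 := rsub (A :|: (X :|: Y)) B.
have E2 : (A :|: (X :|: Y)) :|: B = A :|: B.
  by rewrite setUA (setUidPl sX) -setUA (setUidPr sY).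
have E3 : (A :|: (X :|: Y)) :&: B = Y.
  apply/setP => y; rewrite !inE; case yY: (y \in Y); first by rewrite (subsetP sY _ yY) !orbT.
  case yB: (y \in B); last by rewrite andbF.
  case yX: (y \in X); first by move/setP: d => /(_ y); rewrite !inE (subsetP sX _ yX) yB.
  by move/setP: d => /(_ y); rewrite !inE yB andbT /= => ->.
rewrite E1 in h1; rewrite E2 E3 in h2.
lia.
Qed.

Lemma skew_circ A B W : A :&: B = set0 -> r (A :|: B) = r A + r B ->
  is_circuit r W -> W \subset A :|: B -> W \subset A \/ W \subset B.
Proof.
move=> d e cW sW.
case: (boolP (W \subset A)) => hA; first by left.
case: (boolP (W \subset B)) => hB; first by right.
exfalso.
have [h H] := circP cW.
have pA : W :&: A \proper W by rewrite properEneq subsetIl andbT; apply: contra hA => /eqP <-; exact: subsetIr.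
have pB : W :&: B \proper W by rewrite properEneq subsetIl andbT; apply: contra hB => /eqP <-; exact: subsetIr.
have := H _ pA; have := H _ pB.
have := skew_sub d e (subsetIr W A) (subsetIr W B).
have EW : (W :&: A) :|: (W :&: B) = W by rewrite -setIUr; apply/setIidPl.
have := cardsUI (W :&: A) (W :&: B).
have -> : (W :&: A) :&: (W :&: B) = set0.
  apply/setP => y; rewrite !inE; apply/negP => /andP [/andP [_ yA] /andP [_ yB]].
  by move/setP: d => /(_ y); rewrite !inE yA yB.
rewrite EW cards0; lia.
Qed.


Lemma cardU_disj A B : A :&: B = set0 -> #|A :|: B| = #|A| + #|B|.
Proof. by move=> d; have := cardsUI A B; rewrite d cards0 addn0. Qed.

Lemma conn_aux k C1 C2 x z : #|C1 :|: C2| <= k -> is_circuit r C1 -> is_circuit r C2 ->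
  x \in C1 -> z \in C2 -> C1 :&: C2 != set0 ->
  exists C : {set T}, [/\ is_circuit r C, x \in C & z \in C].
Proof.
elim: k C1 C2 => [|k IH] C1 C2 hk c1 c2 x1 z2 ne.
  have : 0 < #|C1| by apply/card_gt0P; exists x.
  have := subset_leq_card (subsetUl C1 C2); lia.
case: (boolP (z \in C1)) => z1; first by exists C1.
case: (boolP (x \in C2)) => x2; first by exists C2.
case/set0Pn: ne => e; rewrite inE => /andP [e1 e2].
have [C3 [c3 zC3 sC3]] := strong_elim c2 c1 e2 e1 z2 z1.
have [C4 [c4 xC4 sC4]] := strong_elim c1 c2 e1 e2 x1 x2.
have [w [wC3 w1 w2]] : exists w, [/\ w \in C3, w \in C1 & w \notin C2].
  case: (boolP [exists w, [&& w \in C3, w \in C1 & w \notin C2]]).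
    by case/existsP => w0 /and3P [? ? ?]; exists w0.
  rewrite negb_exists => /forallP H; exfalso.
  have s : C3 \subset C2.
    apply/subsetP => y yC3; have := H y; rewrite yC3 /=.
    have := subsetP sC3 y yC3; rewrite !inE => /andP [_].
    by case: (y \in C2); case: (y \in C1).
  have E := circ_eq c3 c2 s.
  by have := subsetP sC3 e; rewrite E e2 !inE eqxx => /(_ isT).
have [u [uC4 u2 u1]] : exists u, [/\ u \in C4, u \in C2 & u \notin C1].
  case: (boolP [exists w, [&& w \in C4, w \in C2 & w \notin C1]]).
    by case/existsP => w0 /and3P [? ? ?]; exists w0.
  rewrite negb_exists => /forallP H; exfalso.
  have s : C4 \subset C1.
    apply/subsetP => y yC4; have := H y; rewrite yC4 /=.
    have := subsetP sC4 y yC4; rewrite !inE => /andP [_].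
    by case: (y \in C2); case: (y \in C1).
  have E := circ_eq c4 c1 s.
  by have := subsetP sC4 e; rewrite E e1 !inE eqxx => /(_ isT).
have s42 : C4 :|: C2 \subset C1 :|: C2.
  by rewrite subUset subsetUr andbT (subset_trans sC4) // subD1set.
case: (leqP #|C4 :|: C2| k) => hk42.
  apply: (IH C4 C2 _ c4 c2 xC4 z2); first exact: hk42.
  by apply/set0Pn; exists u; rewrite inE uC4 u2.
have E : C4 :|: C2 = C1 :|: C2.
  by apply/eqP; rewrite eqEcard s42 /=; exact: leq_trans hk hk42.
have wC4 : w \in C4.
  have : w \in C4 :|: C2 by rewrite E inE w1.
  by rewrite inE (negbTE w2) orbF.
apply: (IH C4 C3 _ c4 c3 xC4 zC3).
  have s34 : C4 :|: C3 \subset (C1 :|: C2) :\ e.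
    by rewrite subUset sC4 (subset_trans sC3) // setUC.
  have h1 := subset_leq_card s34; have h2 := cardsD1 e (C1 :|: C2); rewrite inE e1 /= in h2.
  clear -h1 h2 hk; lia.
by apply/set0Pn; exists w; rewrite inE wC4 wC3.
Qed.

Definition conn (x z : T) : bool :=
  (x == z) || [exists C : {set T}, [&& is_circuit r C, x \in C & z \in C]].

Lemma conn_trans x y z : conn x y -> conn y z -> conn x z.
Proof.
rewrite /conn; case/orP => [/eqP -> //|/existsP [C1 /and3P [c1 x1 y1]]].
case/orP => [/eqP <-|/existsP [C2 /and3P [c2 y2 z2]]].
  by apply/orP; right; apply/existsP; exists C1; rewrite c1 x1 y1.
have ne : C1 :&: C2 != set0 by apply/set0Pn; exists y; rewrite inE y1 y2.
have [C [c xC zC]] := conn_aux (leqnn _) c1 c2 x1 z2 ne.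
by apply/orP; right; apply/existsP; exists C; rewrite c xC zC.
Qed.

Lemma conn_circ W x z : is_circuit r W -> x \in W -> z \in W -> conn x z.
Proof. by move=> cW xW zW; apply/orP; right; apply/existsP; exists W; rewrite cW xW zW. Qed.

Lemma conn_sep c0 : r [set e | conn c0 e] + r (~: [set e | conn c0 e]) <= r setT.
Proof.
set A := [set e | conn c0 e]; rewrite -(setUCr A); apply: sep_le; first by rewrite setICr.
move=> W cW _.
case: (boolP [exists w, (w \in W) && (w \in A)]).
  case/existsP => w /andP [wW wA]; left; apply/subsetP => y yW.
  by move: wA; rewrite !inE => h; apply: conn_trans h (conn_circ cW wW yW).
rewrite negb_exists => /forallP H; right; apply/subsetP => y yW.
by have := H y; rewrite yW /= in_setC.
Qed.
End Mat.

End M2.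
Import M2.
Module M3.

Section Key.
Variable T : finType.
Variable r : {set T} -> nat.
Hypothesis hr : is_matroid_rank r.
Implicit Types X Y I C D W A B Z S K : {set T}.
Local Notation rle := (M2.rle hr).
Local Notation rmono := (M2.rmono hr).
Local Notation rsub := (M2.rsub hr).
Local Notation indep_sub := (M2.indep_sub hr).
Local Notation circ_rank := (M2.circ_rank hr).
Local Notation closure := (M2.closure hr).
Local Notation strong_elim := (M2.strong_elim hr).
Local Notation two_circ := (M2.two_circ hr).
Local Notation null_mono := (M2.null_mono hr).
Local Notation sep_le := (M2.sep_le hr).
Local Notation skew_circ := (M2.skew_circ hr).

Lemma in_circ_closure S K x : is_circuit r K -> K \subset S -> x \in K -> r (S :\ x) = r S.
Proof.
move=> cK sK xK; have xS : x \in S := subsetP sK x xK.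
rewrite -{2}(setD1K xS); symmetry; apply: closure cK xK _.
by apply: setSD.
Qed.

Lemma keyU S (Z1 Z2 : {set T}) x : r S + 2 = #|S| -> is_circuit r Z1 -> is_circuit r Z2 -> Z1 != Z2 ->
  Z1 \subset S -> Z2 \subset S -> x \in S -> r (S :\ x) = r S -> x \in Z1 :|: Z2.
Proof.
move=> nS c1 c2 ne s1 s2 xS e; apply/negPn/negP => nx.
have s : Z1 :|: Z2 \subset S :\ x.
  apply/subsetP => y yZ; rewrite !inE (subsetP _ y yZ) ?andbT; last by rewrite subUset s1 s2.
  by apply/eqP => yx; move: nx; rewrite -yx yZ.
have h1 := two_circ c1 c2 ne; have h2 := null_mono s.
have h3 := cardsD1 x S; rewrite xS /= in h3.
clear -h1 h2 h3 nS e; lia.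
Qed.

Lemma half C Z : is_circuit r C -> is_circuit r Z -> Z :&: C != set0 -> ~~ (Z \subset C) ->
  #|C :|: Z| <= r (C :|: Z) + 2 ->
  exists Z' : {set T}, is_circuit r Z' /\ #|Z :\: C| + #|C :\: Z| <= #|Z'|.
Proof.
move=> cC cZ ZC nZC nn.
have CZ : C != Z by apply: contraNneq nZC => ->.
have nS : r (C :|: Z) + 2 = #|C :|: Z|.
  have := two_circ cC cZ CZ; clear -nn; lia.
case/set0Pn: ZC => c; rewrite inE => /andP [cZ' cC'].
have [d [dZ dC]] : exists d, d \in Z /\ d \notin C.
  case/subsetPn: nZC => d ? ?; by exists d.
have [Z' [c' dZ' sZ']] := strong_elim cZ cC cZ' cC' dZ dC.
have sZ'S : Z' \subset C :|: Z by apply: subset_trans sZ' _; rewrite setUC subD1set.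
have cZ'_ : c \notin Z' by apply/negP => /(subsetP sZ'); rewrite !inE eqxx.
have ne1 : C != Z' by apply: contraNneq cZ'_ => <-.
have ne2 : Z != Z' by apply: contraNneq cZ'_ => <-.
have sub : (Z :\: C) :|: (C :\: Z) \subset Z'.
  apply/subsetP => y; rewrite inE => /orP []; rewrite inE => /andP [y1 y2].
  - have yS : y \in C :|: Z by rewrite inE y2 orbT.
    have := keyU nS cC c' ne1 (subsetUl _ _) sZ'S yS (in_circ_closure cZ (subsetUr _ _) y2).
    by rewrite inE (negbTE y1).
  - have yS : y \in C :|: Z by rewrite inE y2.
    have := keyU nS cZ c' ne2 (subsetUr _ _) sZ'S yS (in_circ_closure cC (subsetUl _ _) y2).
    by rewrite inE (negbTE y1).
exists Z'; split => //.
have d0 : (Z :\: C) :&: (C :\: Z) = set0.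
  apply/setP => y; rewrite !inE; by case: (y \in C); case: (y \in Z); rewrite ?andbF.
by rewrite -(cardU_disj d0); apply: subset_leq_card.
Qed.

Lemma step1 C D Z : is_circuit r C -> is_circuit r D -> C :&: D = set0 ->
  r (C :|: D) = r C + r D -> is_circuit r Z -> Z :&: C != set0 -> Z :&: D != set0 ->
  (forall Z', is_circuit r Z' -> Z' :&: C != set0 -> Z' :&: D != set0 ->
     #|Z' :\: (C :|: D)| < #|Z :\: (C :|: D)| -> False) ->
  #|C :|: Z| <= r (C :|: Z) + 2.
Proof.
move=> cC cD dCD sk cZ ZC ZD H.
rewrite leqNgt; apply/negP => big.
case/set0Pn: (ZD) => q; rewrite inE => /andP [qZ qD].
have qC : q \notin C.
  by apply/negP => qC; move/setP: dCD => /(_ q); rewrite !inE qC qD.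
set Y := (C :|: Z) :\ q.
have sCY : C \subset Y.
  apply/subsetP => y yC; rewrite !inE yC andbT.
  by apply/eqP => yq; move: qC; rewrite -yq yC.
have hY : #|C :|: Z| = #|Y| + 1.
  by have := cardsD1 q (C :|: Z); rewrite !inE qZ orbT /= addnC.
have rY : r Y <= r (C :|: Z) by apply: rmono; apply: subD1set.
have [W [cW sWY nWC]] : exists W, [/\ is_circuit r W, W \subset Y & ~~ (W \subset C)].
  case: (boolP [exists W : {set T}, [&& is_circuit r W, W \subset Y & ~~ (W \subset C)]]).
    by case/existsP => W /and3P [? ? ?]; exists W.
  rewrite negb_exists => /forallP HW; exfalso.
  have d0 : C :&: (Y :\: C) = set0.
    by apply/setP => y; rewrite !inE; case: (y \in C); rewrite ?andbF.
  have EY : C :|: (Y :\: C) = Y.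
    by rewrite -{2}(setID Y C) (setIidPr sCY) .
  have h1 : r C + r (Y :\: C) <= r Y.
    rewrite -{2}EY; apply: sep_le d0 _ => W cW sW; left.
    rewrite EY in sW; have := HW W; rewrite cW sW /=; by case: (W \subset C).
  have iZC : r (Z :\: C) = #|Z :\: C|.
    have [_ HZ] := circP cZ; apply: HZ; rewrite properEneq subsetDl andbT.
    apply/negP => /eqP E; case/set0Pn: ZC => y; rewrite inE => /andP [yZ yC].
    by move: yZ; rewrite -E inE yC.
  have iYC : r (Y :\: C) = #|Y :\: C|.
    apply: indep_sub iZC; apply/subsetP => y; rewrite !inE => /andP [yC /andP [_ ]].
    by rewrite (negbTE yC) /= => ->.
  have cY : #|Y| = #|C| + #|Y :\: C| by rewrite -(cardU_disj d0) EY.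
  have [rC _] := circ_rank cC.
  clear -h1 iYC cY rC rY hY big; lia.
have [p [pW pC pD]] : exists p, [/\ p \in W, p \notin C & p \notin D].
  case: (boolP [exists p, [&& p \in W, p \notin C & p \notin D]]).
    by case/existsP => p /and3P [? ? ?]; exists p.
  rewrite negb_exists => /forallP HW; exfalso.
  have sW : W \subset C :|: D.
    apply/subsetP => y yW; have := HW y; rewrite yW !inE /=.
    by case: (y \in C); case: (y \in D).
  case: (skew_circ dCD sk cW sW) => [sWC|sWD]; first by rewrite sWC in nWC.
  have E := circ_eq cW cD sWD.
  by move: (subsetP sWY q); rewrite E qD !inE eqxx => /(_ isT).
have pZ : p \in Z.
  by have := subsetP sWY p pW; rewrite !inE (negbTE pC) /= => /andP [_].
have qW : q \notin W by apply/negP => /(subsetP sWY); rewrite !inE eqxx.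
have [Z3 [c3 qZ3 sZ3]] := strong_elim cZ cW pZ pW qZ qW.
apply: (H Z3 c3).
- apply/negP => /eqP Z3C.
  have s : Z3 \subset Z.
    apply/subsetP => y yZ3; have := subsetP sZ3 y yZ3; rewrite !inE => /andP [_].
    case/orP => // yW'; have := subsetP sWY y yW'; rewrite !inE => /andP [_].
    case/orP => // yC; by move/setP: Z3C => /(_ y); rewrite !inE yZ3 yC.
  have E := circ_eq c3 cZ s.
  by move: (subsetP sZ3 p); rewrite E pZ !inE eqxx => /(_ isT).
- by apply/set0Pn; exists q; rewrite inE qZ3 qD.
- have s : Z3 :\: (C :|: D) \subset (Z :\: (C :|: D)) :\ p.
    apply/subsetP => y; rewrite !inE => /andP [nyCD yZ3].
    have := subsetP sZ3 y yZ3; rewrite !inE => /andP [yp].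
    rewrite yp nyCD /=; case/orP => // yW'; have := subsetP sWY y yW'.
    rewrite !inE => /andP [_]; case/orP => //.
    by move: nyCD; rewrite negb_or => /andP [/negbTE -> _].
  have h1 := subset_leq_card s.
  have h2 := cardsD1 p (Z :\: (C :|: D)); rewrite !inE pZ (negbTE pC) (negbTE pD) /= in h2.
  clear -h1 h2; lia.
Qed.


Lemma key_finish C D Z : is_circuit r C -> is_circuit r D -> #|D| = #|C| ->
  (forall W, is_circuit r W -> #|W| <= #|C|) -> C :&: D = set0 ->
  r (C :|: D) = r C + r D -> is_circuit r Z -> Z :&: C != set0 -> Z :&: D != set0 ->
  (forall Z', is_circuit r Z' -> Z' :&: C != set0 -> Z' :&: D != set0 ->
     #|Z' :\: (C :|: D)| < #|Z :\: (C :|: D)| -> False) -> False.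
Proof.
move=> cC cD eDC mx dCD sk cZ ZC ZD H.
have n1 := step1 cC cD dCD sk cZ ZC ZD H.
have dDC : D :&: C = set0 by rewrite setIC.
have skD : r (D :|: C) = r D + r C by rewrite setUC addnC.
have n2 : #|D :|: Z| <= r (D :|: Z) + 2.
  apply: (step1 cD cC dDC skD cZ ZD ZC) => Z' c' h1 h2 lt.
  by apply: (H Z' c' h2 h1); rewrite setUC.
have ZnC : ~~ (Z \subset C).
  apply/negP => sZ; case/set0Pn: ZD => y; rewrite inE => /andP [yZ yD].
  by move/setP: dCD => /(_ y); rewrite !inE (subsetP sZ _ yZ) yD.
have ZnD : ~~ (Z \subset D).
  apply/negP => sZ; case/set0Pn: ZC => y; rewrite inE => /andP [yZ yC].
  by move/setP: dCD => /(_ y); rewrite !inE (subsetP sZ _ yZ) yC.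
have [Z1 [c1 h1]] := half cC cZ ZC ZnC n1.
have [Z2 [c2 h2]] := half cD cZ ZD ZnD n2.
have m1 := mx _ c1; have m2 := mx _ c2.
have e1 := cardsID C Z; have e2 := cardsID Z C; have e3 := cardsID D Z; have e4 := cardsID Z D.
have dd : (Z :&: C) :&: (Z :&: D) = set0.
  apply/setP => y; rewrite !inE; apply/negP => /andP [/andP [_ yC] /andP [_ yD]].
  by move/setP: dCD => /(_ y); rewrite !inE yC yD.
have pr : (Z :&: C) :|: (Z :&: D) \proper Z.
  rewrite properEneq -setIUr subsetIl andbT; apply/negP => /eqP E.
  have sZ : Z \subset C :|: D by rewrite -E subsetIr.
  by case: (skew_circ dCD sk cZ sZ) => s; [rewrite s in ZnC | rewrite s in ZnD].
have e5 := proper_card pr; rewrite (cardU_disj dd) in e5.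
rewrite (setIC C Z) in e2; rewrite (setIC D Z) in e4.
clear -m1 m2 h1 h2 e1 e2 e3 e4 e5 eDC; lia.
Qed.

Lemma key C D Z : is_circuit r C -> is_circuit r D -> #|D| = #|C| ->
  (forall W, is_circuit r W -> #|W| <= #|C|) -> C :&: D = set0 ->
  r (C :|: D) = r C + r D -> is_circuit r Z -> Z :&: C != set0 -> Z :&: D != set0 -> False.
Proof.
move=> cC cD eDC mx dCD sk.
move: {2}#|Z :\: (C :|: D)| (leqnn #|Z :\: (C :|: D)|) => k.
elim: k Z => [|k IH] Z hk cZ ZC ZD; apply: (key_finish cC cD eDC mx dCD sk cZ ZC ZD).
  move=> Z' _ _ _ lt; clear -hk lt; lia.
move=> Z' c' h1 h2 lt; apply: (IH Z') => //; clear -hk lt; lia.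
Qed.

End Key.

End M3.
Import M3.
Module M4.

Definition contr (T : finType) (r : {set T} -> nat) (S : {set T}) : {set T} -> nat :=
  fun X => r (X :|: S) - r S.
Definition restr (T : finType) (r : {set T} -> nat) (A : {set T}) : {set T} -> nat :=
  fun X => r (X :&: A).

Section Minors.
Variable T : finType.
Variable r : {set T} -> nat.
Hypothesis hr : is_matroid_rank r.
Implicit Types X Y I C D W A B Z S K : {set T}.
Local Notation rle := (M2.rle hr).
Local Notation rmono := (M2.rmono hr).
Local Notation rsub := (M2.rsub hr).
Local Notation rU := (M2.rU hr).
Local Notation r0 := (M2.r0 hr).
Local Notation indep_sub := (M2.indep_sub hr).
Local Notation circ_rank := (M2.circ_rank hr).
Local Notation two_circ := (M2.two_circ hr).
Local Notation null_mono := (M2.null_mono hr).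
Local Notation sep_le := (M2.sep_le hr).

Lemma contr_matroid S : is_matroid_rank (contr r S).
Proof.
rewrite /contr; split.
- move=> X; have := rU X S; have := rle X; have := rmono (subsetUr X S); lia.
- move=> X Y sXY; have := rmono (setSU S sXY); lia.
- move=> X Y.
  have := rsub (X :|: S) (Y :|: S).
  have -> : (X :|: S) :|: (Y :|: S) = (X :|: Y) :|: S.
    by rewrite setUACA setUid.
  have -> : (X :|: S) :&: (Y :|: S) = (X :&: Y) :|: S by rewrite -setUIl.
  have := rmono (subsetUr (X :&: Y) S); have := rmono (subsetUr X S);
  have := rmono (subsetUr Y S); have := rmono (subsetUr (X :|: Y) S).
  lia.
Qed.

Lemma restr_matroid A : is_matroid_rank (restr r A).
Proof.
rewrite /restr; split.
- move=> X; have := rle (X :&: A); have := subset_leq_card (subsetIl X A); lia.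
- by move=> X Y sXY; apply: rmono; apply: setSI.
- move=> X Y; have := rsub (X :&: A) (Y :&: A).
  by rewrite -setIUl setIACA setIid.
Qed.

Lemma restr_circ A N : 0 < N -> (forall C, is_circuit r C -> #|C| <= N) ->
  forall C, is_circuit (restr r A) C -> #|C| <= N.
Proof.
move=> N0 H C cC.
case: (boolP (C \subset A)) => sCA.
  apply: H; move: cC; rewrite /is_circuit /restr (setIidPl sCA).
  case/andP => -> /forallP F; apply/forallP => D; have := F D.
  case: (boolP (D \proper C)) => //= pD.
  by rewrite (setIidPl (subset_trans (proper_sub pD) sCA)).
case/subsetPn: sCA => x xC xA.
have [h1 h2] := circP cC.
case: (boolP ([set x] \proper C)) => p.
  have := h2 _ p; rewrite /restr cards1.
  have -> : [set x] :&: A = set0.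
    by apply/setP => y; rewrite !inE; case: (y =P x) => // ->; rewrite (negbTE xA).
  by rewrite r0.
have E : C = [set x].
  apply/eqP; rewrite eq_sym eqEproper p andbT sub1set xC //.
by rewrite E cards1.
Qed.


Definition connected := forall X, r X + r (~: X) = r setT -> r X = 0 \/ r (~: X) = 0.

Lemma contr_circ C : connected -> is_circuit r C -> 2 <= #|C| ->
  (forall W, is_circuit r W -> #|W| <= #|C|) ->
  forall D, is_circuit (contr r C) D -> #|D| <= #|C|.-1.
Proof.
move=> hcon cC C2 mx D cD.
have [hD HD] := circP cD.
rewrite /contr in hD HD.
case: (boolP (D :&: C == set0)) => dDC; last first.
  case/set0Pn: dDC => c; rewrite inE => /andP [cD' cC'].
  case: (boolP ([set c] \proper D)) => p.
    have := HD _ p; rewrite cards1.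
    have -> : [set c] :|: C = C by apply/setUidPr; rewrite sub1set.
    by rewrite subnn.
  have -> : D = [set c] by apply/eqP; rewrite eq_sym eqEproper p andbT sub1set.
  by rewrite cards1; clear -C2; lia.
move/eqP: dDC => dDC.
have dCD : C :&: D = set0 by rewrite setIC.
rewrite leqNgt; apply/negP => bigD.
have [rC _] := circ_rank cC.
have D0 : 0 < #|D| by clear -C2 bigD; lia.
case/card_gt0P: (D0) => x0 x0D.
have rDC : r (D :|: C) = r C + #|D| - 1.
  have := HD _ (properD1 x0D); have := cardsD1 x0 D; rewrite x0D /=.
  have := rmono (setSU C (subD1set D x0)); have := rmono (subsetUr D C).
  clear -hD; lia.
have HD' : forall D', D' \proper D -> r D' = #|D'|.
  move=> D' pD'; have := HD _ pD'; have := rU D' C; have := rle D'; clear; lia.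
have rDle : #|D| <= r D + 1 by have := rU D C; clear -rDC rC bigD; lia.
case: (ltnP (r D) #|D|) => iD; last first.
  have iD' : r D = #|D| by have := rle D; clear -iD; lia.
  have [W [cW sW nWC]] : exists W, [/\ is_circuit r W, W \subset C :|: D & ~~ (W \subset C)].
    case: (boolP [exists W : {set T}, [&& is_circuit r W, W \subset C :|: D & ~~ (W \subset C)]]).
      by case/existsP => W /and3P [? ? ?]; exists W.
    rewrite negb_exists => /forallP HW; exfalso.
    have := sep_le dCD (fun W cW sW => or_introl _).
    have h : r C + r D <= r (C :|: D).
      apply: sep_le dCD _ => W cW' sW'; left.
      by have := HW W; rewrite cW' sW' /=; case: (W \subset C).
    rewrite setUC in rDC; clear -h rDC iD' D0; lia.
  have CW : C != W by apply: contraNneq nWC => <-.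
  have sDW : D \subset W.
    apply/subsetP => x xD; apply/negPn/negP => xW.
    set S' := (C :|: D) :\ x.
    have sCW : C :|: W \subset S'.
      apply/subsetP => y; rewrite !inE => /orP [yC|yW].
        rewrite yC andbT; apply/eqP => yx; move/setP: dCD => /(_ y); rewrite !inE yC yx xD //.
      have yCD := subsetP sW y yW; rewrite inE in yCD; rewrite yCD andbT; by apply/eqP => yx; move: xW; rewrite -yx yW.
    have h1 := two_circ cC cW CW; have h2 := null_mono sCW.
    have h3 : #|S'| + 1 = #|C| + #|D|.
      have := cardsD1 x (C :|: D); rewrite (cardU_disj dCD) !inE xD orbT /=.
      rewrite /S'; clear; lia.
    have h4 : r S' = r C + #|D| - 1.
      have -> : S' = (D :\ x) :|: C.
        apply/setP => y; rewrite !inE; case: (y =P x) => [->|_] /=.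
          by move/setP: dCD => /(_ x); rewrite !inE xD andbT => ->.
        by rewrite orbC.
      have := HD _ (properD1 xD); have := cardsD1 x D; rewrite xD /=; have := rmono (subsetUr (D :\ x) C); clear -D0; lia.
    clear -h1 h2 h3 h4 rC D0; lia.
  have WC : W :&: C != set0.
    apply/negP => /eqP W0; have sWD : W \subset D.
      apply/subsetP => y yW; have := subsetP sW y yW; rewrite inE; case/orP => // yC.
      by move/setP: W0 => /(_ y); rewrite !inE yW yC.
    have := indep_sub sWD iD'; have [h _] := circP cW; clear -h; lia.
  have pDW : D \proper W.
    rewrite properEneq sDW andbT; apply/negP => /eqP E; move: WC; rewrite -E.
    by rewrite dDC eqxx.
  have := proper_card pDW; have := mx _ cW; clear -bigD; lia.
have cD' : is_circuit r D.
  by rewrite /is_circuit iD; apply/forallP => D'; apply/implyP => p; rewrite (HD' _ p).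
have eD : #|D| = #|C| by have := mx _ cD'; clear -bigD; lia.
have sk : r (C :|: D) = r C + r D.
  have [rD _] := circ_rank cD'; rewrite setUC rDC rD; clear -D0; lia.
case/card_gt0P: (ltnW C2) => c0 c0C.
set A := [set e | conn r c0 e].
case: (boolP [exists d, (d \in D) && (d \in A)]).
  case/existsP => d /andP [dD]; rewrite inE => /orP [/eqP cd|].
    by move: c0C; rewrite cd => dC; move/setP: dCD => /(_ d); rewrite !inE dC dD.
  case/existsP => Z /and3P [cZ c0Z dZ].
  exfalso; apply: (key hr cC cD' eD mx dCD sk cZ).
    by apply/set0Pn; exists c0; rewrite inE c0Z.
  by apply/set0Pn; exists d; rewrite inE dZ.
rewrite negb_exists => /forallP Hn.
have sDA : D \subset ~: A by apply/subsetP => d dD; have := Hn d; rewrite dD in_setC.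
have sCA : C \subset A by apply/subsetP => c cC'; rewrite inE; apply: (conn_circ cC c0C cC').
have e1 := conn_sep hr c0; rewrite -/A in e1.
have e2 : r setT <= r A + r (~: A) by rewrite -(setUCr A); apply: rU.
have rDp : 0 < r D by have [rD _] := circ_rank cD'; clear -rD eD C2; lia.
have rCp : 0 < r C by clear -rC C2; lia.
case: (hcon A); first by clear -e1 e2; lia.
  by move=> h; have := rmono sCA; clear -h rCp; lia.
by move=> h; have := rmono sDA; clear -h rDp; lia.
Qed.

End Minors.

End M4.
Import M4.
Module T1.

Section Tree.
Variables (V : finType) (root : V) (p : V -> V).
Hypothesis ht : is_rooted_tree root p.

Lemma iter_root k : iter k p root = root.
Proof. by case: ht => h _; elim: k => //= k ->. Qed.

Lemma iter_stable k K v : iter k p v = root -> k <= K -> iter K p v = root.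
Proof.
move=> h kK; rewrite -(subnK kK) iterD h; exact: iter_root.
Qed.

Lemma iter_card v : iter #|V| p v = root.
Proof. by case: ht. Qed.

Lemma dist_spec v : iter (dist_root root p v) p v = root /\
  forall k, iter k p v = root -> dist_root root p v <= k.
Proof.
rewrite /dist_root.
set a := fun k => iter k p v == root.
have hs : has a (iota 0 #|V|.+1).
  apply/hasP; exists #|V|; first by rewrite mem_iota add0n ltnSn andbT.
  by rewrite /a iter_card.
have fl := hs; rewrite has_find size_iota in fl.
split.
  have := nth_find 0 hs; rewrite nth_iota // /a add0n => /eqP //.
move=> k hk; case: (leqP k #|V|) => kV; last by lia.
rewrite leqNgt; apply/negP => lt.
have := before_find 0 lt; rewrite nth_iota; last by lia.
by rewrite /a add0n hk eqxx.
Qed.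

Lemma dist_lt v : dist_root root p v <= #|V|.-1.
Proof.
have [h1 h2] := dist_spec v.
move: (dist_root root p v) h1 h2 => d h1 h2.
have inj : injective (fun i : 'I_d => iter i p v).
  move=> i j e.
  wlog lt : i j e / i < j.
    move=> H; case: (ltngtP i j) => c; [exact: H| symmetry; exact: H|exact: val_inj].
  exfalso.
  have : iter (d - j + i) p v = root.
    by rewrite iterD e -iterD subnK // ltnW.
  move/h2; have := ltn_ord j; lia.
have sub : [set iter (nat_of_ord i) p v | i : 'I_d] \subset [set~ root].
  apply/subsetP => u /imsetP [i _ ->]; rewrite !inE; apply/eqP => e.
  have := h2 _ e; have := ltn_ord i; lia.
by have := subset_leq_card sub; rewrite card_imset // cardsC1 card_ord.
Qed.

Lemma dist_le v k : iter k p v = root -> dist_root root p v <= k.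
Proof. by have [_ h] := dist_spec v; apply: h. Qed.

Lemma depth_le d : (forall v, iter d p v = root) -> tree_depth root p <= d.
Proof.
move=> H; apply/bigmax_leqP => v _; exact: dist_le.
Qed.

Lemma iter_depth v : iter (tree_depth root p) p v = root.
Proof.
have [h _] := dist_spec v; apply: iter_stable h _.
by apply: (@leq_bigmax_cond _ xpredT (fun v => dist_root root p v) v).
Qed.

Lemma pathP u v : reflect (exists k, iter k p v = u) (on_root_path p u v).
Proof.
apply: (iffP existsP) => [[k /eqP e]|[k e]]; first by exists k.
case: (leqP k #|V|) => kV.
  have kV1 : k < #|V|.+1 by [].
  by exists (Ordinal kV1); rewrite /= e.
exists ord_max => /=.
rewrite iter_card; rewrite (iter_stable (iter_card v) (ltnW kV)) in e.
by rewrite e.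
Qed.

Lemma path_root u : on_root_path p u root -> u = root.
Proof. by case/pathP => k; rewrite iter_root. Qed.

End Tree.

End T1.
Import T1.
Module T2.

Section Attach.
Variables (V1 V2 : finType) (root1 : V1) (p1 : V1 -> V1) (root2 : V2) (p2 : V2 -> V2) (a : V1).
Hypothesis ht1 : is_rooted_tree root1 p1.
Hypothesis ht2 : is_rooted_tree root2 p2.

Definition W2 : finType := {w : V2 | w != root2}.
Definition VA : finType := (V1 + W2)%type.
Definition lift2 (w : V2) : VA := if insub w is Some w' then inr w' else inl a.
Definition pA (v : VA) : VA := match v with inl v1 => inl (p1 v1) | inr w => lift2 (p2 (val w)) end.
Definition rootA : VA := inl root1.

Lemma lift2_root : lift2 root2 = inl a.
Proof. by rewrite /lift2 insubF // eqxx. Qed.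

Lemma lift2_inr w (h : w != root2) : lift2 w = inr (exist _ w h).
Proof. by rewrite /lift2 insubT. Qed.

Lemma lift2_inj u w : u != root2 -> w != root2 -> lift2 u = lift2 w -> u = w.
Proof. by move=> hu hw; rewrite (lift2_inr hu) (lift2_inr hw) => [[]]. Qed.

Lemma cardA : #|VA| = #|V1| + #|V2|.-1.
Proof. by rewrite card_sum card_sig -(cardsC1 root2); congr (_ + _); apply: eq_card => w; rewrite !inE. Qed.

Lemma iterA_l k v : iter k pA (inl v) = inl (iter k p1 v).
Proof. by elim: k => //= k ->. Qed.

Lemma iterA_r k w : iter k p2 w != root2 -> iter k pA (lift2 w) = lift2 (iter k p2 w).
Proof.
elim: k => //= k IH h.
have h' : iter k p2 w != root2.
  apply: contra h => /eqP e; rewrite e; case: ht2 => -> _ //.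
by rewrite IH // (lift2_inr h').
Qed.

Lemma iterA_a k w : iter k p2 w = root2 -> exists2 k', k' <= k & iter k' pA (lift2 w) = inl a.
Proof.
elim: k w => [|k IH] w h.
  by exists 0 => //=; rewrite /= in h; rewrite h lift2_root.
case: (boolP (w == root2)) => [/eqP ->|hw]; first by exists 0 => //; rewrite lift2_root.
rewrite iterSr in h.
have [k' h1 h2] := IH _ h.
exists k'.+1 => //; rewrite iterSr /= (lift2_inr hw) /=; exact: h2.
Qed.

Lemma lift2_val (w : W2) : lift2 (val w) = inr w.
Proof. by rewrite /lift2 valK. Qed.

Lemma iterA_root k : iter k pA rootA = rootA.
Proof. by rewrite /rootA iterA_l (iter_root ht1). Qed.

Lemma iterA_stable k K v : iter k pA v = rootA -> k <= K -> iter K pA v = rootA.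
Proof. by move=> h kK; rewrite -(subnK kK) iterD h iterA_root. Qed.

Lemma reachA (w : V2) : exists2 k, k <= dist_root root2 p2 w + dist_root root1 p1 a &
  iter k pA (lift2 w) = rootA.
Proof.
have [d1 _] := dist_spec ht2 w.
have [k' h1 h2] := iterA_a d1.
have [e1 _] := dist_spec ht1 a.
exists (dist_root root1 p1 a + k'); first by rewrite addnC leq_add2r.
by rewrite iterD h2 iterA_l e1.
Qed.

Lemma treeA : is_rooted_tree rootA pA.
Proof.
split; first by rewrite /= ; case: ht1 => -> _.
have c1 : #|V1| <= #|VA| by rewrite cardA leq_addr.
case=> [v|w].
  by rewrite iterA_l (iter_stable ht1 (iter_card ht1 v) c1).
have [k h1 h2] := reachA (val w); rewrite lift2_val in h2.
apply: iterA_stable h2 _; rewrite cardA.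
have := dist_lt ht2 (val w); have := dist_lt ht1 a.
have : 0 < #|V1| by apply/card_gt0P; exists root1.
clear -h1; lia.
Qed.

Lemma distA_l v : dist_root rootA pA (inl v) <= dist_root root1 p1 v.
Proof.
apply: (dist_le treeA); have [e _] := dist_spec ht1 v; by rewrite iterA_l e.
Qed.

Lemma distA_r w : dist_root rootA pA (lift2 w) <= dist_root root2 p2 w + dist_root root1 p1 a.
Proof.
have [k h1 h2] := reachA w; exact: leq_trans (dist_le treeA h2) h1.
Qed.

Lemma depthA : tree_depth rootA pA <= maxn (tree_depth root1 p1) (dist_root root1 p1 a + tree_depth root2 p2).
Proof.
apply/bigmax_leqP => v _; case: v => [v|w].
  apply: leq_trans (distA_l v) _; apply: leq_trans (leq_maxl _ _).
  exact: (@leq_bigmax_cond _ xpredT (fun v => dist_root root1 p1 v) v).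
rewrite -lift2_val; apply: leq_trans (distA_r _) _; apply: leq_trans (leq_maxr _ _).
rewrite addnC leq_add2l.
exact: (@leq_bigmax_cond _ xpredT (fun v => dist_root root2 p2 v) (val w)).
Qed.

Lemma pathA_l u v : on_root_path p1 u v -> on_root_path pA (inl u) (inl v).
Proof.
case/(T1.pathP ht1) => k e; apply/(T1.pathP treeA); exists k; by rewrite iterA_l e.
Qed.

Lemma pathA_r u w : u != root2 -> on_root_path p2 u w -> on_root_path pA (lift2 u) (lift2 w).
Proof.
move=> hu /(T1.pathP ht2) [k e]; apply/(T1.pathP treeA); exists k.
by rewrite iterA_r e.
Qed.

Lemma pathA_a u w : on_root_path p1 u a -> on_root_path pA (inl u) (lift2 w).
Proof.
case/(T1.pathP ht1) => k e; apply/(T1.pathP treeA).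
have [k' _ h] := iterA_a (iter_card ht2 w).
exists (k + k'); by rewrite iterD h iterA_l e.
Qed.

End Attach.

End T2.
Import T2.
Module T3.

Section Build.
Variable T : finType.
Implicit Types X Y A S : {set T}.

Lemma trivial_bd (r : {set T} -> nat) : is_matroid_rank r -> r setT = 0 -> branch_depth_le r 0.
Proof.
move=> hr h0.
have t : is_rooted_tree (tt : unit) id.
  by split => // v; case: v; elim: #|_| => //.
exists (unit : finType), tt, id, (fun _ => tt); split; last first.
  by apply: (depth_le t) => v; case: v.
split.
- exact: t.
- by rewrite h0 /tree_edges card_unit.
- move=> X; have := rmono hr (subsetT X); rewrite h0; case: (r X) => //.
Qed.

Definition TS (V : finType) (root : V) (p : V -> V) (f : T -> V) X :=
  [set u : V | (u != root) && [exists x in X, on_root_path p u (f x)]].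

Lemma glue_bd (r : {set T} -> nat) A d : is_matroid_rank r -> r A + r (~: A) = r setT ->
  branch_depth_le (restr r A) d -> branch_depth_le (restr r (~: A)) d -> branch_depth_le r d.
Proof.
move=> hr eA [V1 [root1 [p1 [f1 [[t1 e1 h1] dep1]]]]] [V2 [root2 [p2 [f2 [[t2 e2 h2] dep2]]]]].
set VA' := VA V1 root2.
exists VA', (rootA root1 root2), (@pA _ _ p1 root2 p2 root1),
  (fun x => if x \in A then inl (f1 x) else lift2 root2 root1 (f2 x)).
split; last first.
  apply: leq_trans (depthA root1 t1 t2) _.
  have d0 : dist_root root1 p1 root1 = 0 by apply/eqP; rewrite -leqn0; apply: (dist_le t1).
  by rewrite d0 add0n geq_max dep1 dep2.
split; first exact: (treeA root1 t1 t2).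
  rewrite /tree_edges cardA /restr in e1 e2 *; rewrite setTI in e1; rewrite setTI in e2.
  have : 0 < #|V1| by apply/card_gt0P; exists root1.
  have : 0 < #|V2| by apply/card_gt0P; exists root2.
  rewrite /tree_edges in e1 e2; clear -eA e1 e2; lia.
move=> X.
set X1 := X :&: A; set X2 := X :&: ~: A.
have hX : r X <= r X1 + r X2.
  have -> : X = X1 :|: X2 by rewrite /X1 /X2 -setIUr setUCr setIT.
  by apply: rU.
have hX1 : r X1 <= #|TS root1 p1 f1 X1|.
  by have := h1 X1; rewrite /restr /X1 -setIA setIid.
have hX2 : r X2 <= #|TS root2 p2 f2 X2|.
  by have := h2 X2; rewrite /restr /X2 -setIA setIid.
have sub : ((inl : V1 -> VA') @: TS root1 p1 f1 X1) :|: (lift2 root2 root1 @: TS root2 p2 f2 X2)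
   \subset [set u : VA' | (u != rootA root1 root2) && [exists x in X,
      on_root_path (@pA _ _ p1 root2 p2 root1) u (if x \in A then inl (f1 x) else lift2 root2 root1 (f2 x))]].
  apply/subsetP => u; rewrite in_setU => /orP [] /imsetP [v]; rewrite /TS inE => /andP [nv /existsP [x /andP [xX pv]]] ->.
  - move: xX; rewrite /X1 !inE => /andP [xX xA].
    apply/andP; split; first by rewrite /rootA; apply: contra nv => /eqP [->].
    apply/existsP; exists x; rewrite xX xA /=.
    exact: (pathA_l root1 t1 t2).
  - move: xX; rewrite /X2 !inE => /andP [xX xA].
    apply/andP; split; first by rewrite (lift2_inr root1 nv).
    apply/existsP; exists x; rewrite xX (negbTE xA) /=.
    exact: (pathA_r root1 t1 t2).
have dj : ((inl : V1 -> VA') @: TS root1 p1 f1 X1) :&: (lift2 root2 root1 @: TS root2 p2 f2 X2) = set0.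
  apply/setP => u; rewrite !inE; apply/negP => /andP [/imsetP [v _ ->] /imsetP [w]].
  rewrite inE => /andP [nw _]; by rewrite (lift2_inr root1 nw).
have c1 : #|(inl : V1 -> VA') @: TS root1 p1 f1 X1| = #|TS root1 p1 f1 X1|.
  by rewrite card_imset // => ? ? [].
have c2 : #|lift2 root2 root1 @: TS root2 p2 f2 X2| = #|TS root2 p2 f2 X2|.
  apply: card_in_imset => u w; rewrite !inE => /andP [nu _] /andP [nw _].
  exact: lift2_inj.
apply: leq_trans hX _; apply: leq_trans (leq_add hX1 hX2) _.
rewrite -c1 -c2 -(cardU_disj dj); exact: (subset_leq_card sub).
Qed.


Section PathTree.
Variable s : nat.
Definition pP (i : 'I_s.+1) : 'I_s.+1 := inord i.-1.

Lemma iterP k (i : 'I_s.+1) : iter k pP i = inord (i - k).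
Proof.
elim: k => [|k IH] /=; first by rewrite subn0 inord_val.
rewrite IH /pP inordK; last by have := ltn_ord i; lia.
by rewrite subnS.
Qed.

Lemma inord0 : (inord 0 : 'I_s.+1) = ord0.
Proof. by apply: val_inj; rewrite /= inordK. Qed.

Lemma treeP : is_rooted_tree (ord0 : 'I_s.+1) pP.
Proof.
split; first by rewrite /pP /= inord0.
move=> i; rewrite iterP card_ord.
have -> : i - s.+1 = 0 by have := ltn_ord i; lia.
exact: inord0.
Qed.

Lemma iterP_s (i : 'I_s.+1) : iter s pP i = ord0.
Proof. rewrite iterP; have -> : i - s = 0 by have := ltn_ord i; lia. exact: inord0. Qed.

Lemma depthP : tree_depth (ord0 : 'I_s.+1) pP <= s.
Proof. by apply: (depth_le treeP) => i; apply: iterP_s. Qed.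

Lemma distP : dist_root (ord0 : 'I_s.+1) pP ord_max <= s.
Proof. apply: (dist_le treeP); exact: iterP_s. Qed.

Lemma pathP_max (j : 'I_s.+1) : on_root_path pP j ord_max.
Proof.
apply/(T1.pathP treeP); exists (s - j); rewrite iterP /=.
have -> : s - (s - j) = j by have := ltn_ord j; lia.
exact: inord_val.
Qed.
End PathTree.

Lemma contr_bd (r : {set T} -> nat) S d : is_matroid_rank r ->
  branch_depth_le (contr r S) d -> branch_depth_le r (r S + d).
Proof.
move=> hr [V2 [root2 [p2 [f2 [[t2 e2 h2] dep2]]]]].
set s := r S.
set V1 : finType := 'I_s.+1.
have t1 := treeP s.
set VA' := VA V1 root2.
exists VA', (rootA (ord0 : V1) root2), (@pA _ _ (@pP s) root2 p2 ord_max),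
  (fun x => lift2 root2 (ord_max : V1) (f2 x)).
split; last first.
  apply: leq_trans (depthA ord_max t1 t2) _.
  rewrite geq_max; apply/andP; split.
    by apply: leq_trans (depthP s) (leq_addr _ _).
  by apply: leq_add; [exact: distP | exact: dep2].
split; first exact: (treeA ord_max t1 t2).
  rewrite /tree_edges cardA /contr setTU card_ord in e2 *.
  rewrite /tree_edges in e2.
  have : r S <= r setT by apply: (rmono hr); apply: subsetT.
  have : 0 < #|V2| by apply/card_gt0P; exists root2.
  rewrite -/s; clear -e2; lia.
move=> X.
case: (set_0Vmem X) => [->|[x0 x0X]]; first by rewrite (r0 hr).
have hX : r X <= #|TS root2 p2 f2 X| + s.
  have := h2 X; rewrite /contr /Tstar_edges.
  have := rmono hr (subsetUl X S); rewrite -/s.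
  have := rmono hr (subsetUr X S).
  set t := #|_|; rewrite /TS -/t; clear; lia.
have sub : ((inl : V1 -> VA') @: [set i : V1 | i != ord0]) :|: (lift2 root2 (ord_max : V1) @: TS root2 p2 f2 X)
   \subset [set u : VA' | (u != rootA (ord0 : V1) root2) && [exists x in X,
      on_root_path (@pA _ _ (@pP s) root2 p2 ord_max) u (lift2 root2 (ord_max : V1) (f2 x))]].
  apply/subsetP => u; rewrite in_setU => /orP [] /imsetP [v].
  - rewrite !inE => nv ->; apply/andP; split; first by rewrite /rootA; apply: contra nv => /eqP [->].
    apply/existsP; exists x0; rewrite x0X /=.
    exact: (@pathA_a V1 V2 ord0 (@pP s) root2 p2 ord_max t1 t2 v (f2 x0) (pathP_max v)).
  - rewrite /TS inE => /andP [nv /existsP [x /andP [xX pv]]] ->.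
    rewrite !inE; apply/andP; split; first by rewrite (lift2_inr (ord_max : V1) nv).
    apply/existsP; exists x; rewrite xX /=.
    exact: (pathA_r ord_max t1 t2).
have dj : ((inl : V1 -> VA') @: [set i : V1 | i != ord0]) :&: (lift2 root2 (ord_max : V1) @: TS root2 p2 f2 X) = set0.
  apply/setP => u; rewrite !inE; apply/negP => /andP [/imsetP [v _ ->] /imsetP [w]].
  rewrite inE => /andP [nw _]; by rewrite (lift2_inr (ord_max : V1) nw).
have c1 : #|(inl : V1 -> VA') @: [set i : V1 | i != ord0]| = s.
  rewrite card_imset; last by move=> ? ? [].
  have -> : [set i : V1 | i != ord0] = [set~ ord0] by apply/setP => i; rewrite !inE.
  by rewrite cardsC1 card_ord.
have c2 : #|lift2 root2 (ord_max : V1) @: TS root2 p2 f2 X| = #|TS root2 p2 f2 X|.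
  apply: card_in_imset => u w; rewrite !inE => /andP [nu _] /andP [nw _].
  exact: lift2_inj.
apply: leq_trans hX _; rewrite addnC -{1}c1 -c2 -(cardU_disj dj).
exact: (subset_leq_card sub).
Qed.

End Build.

End T3.
Import T3.

Section Final.
Variable T : finType.
Implicit Types X Y A S C W : {set T}.

Lemma bd_mono (r : {set T} -> nat) d d' : d <= d' -> branch_depth_le r d -> branch_depth_le r d'.
Proof.
move=> le [V [root [p [f [h hd]]]]]; exists V, root, p, f; split => //; exact: leq_trans hd le.
Qed.

Lemma inner n :
  (forall r', is_matroid_rank r' -> (forall C, is_circuit r' C -> #|C| <= n) -> 0 < n ->
     branch_depth_le r' (n ^ 2)) ->
  forall r, is_matroid_rank r -> (forall C, is_circuit r C -> #|C| <= n.+1) ->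
  branch_depth_le r (n.+1 ^ 2).
Proof.
move=> IHo r hr hC.
move: {2}(r setT) (leqnn (r setT)) => k; elim: k r hr hC => [|k IH] r hr hC hk.
  apply: bd_mono (trivial_bd hr _) => //; clear -hk; lia.
case: (posnP (r setT)) => [h0|hpos].
  apply: bd_mono (trivial_bd hr h0) => //; clear; lia.
case: (boolP [exists X : {set T}, [&& 0 < r X, 0 < r (~: X) & r X + r (~: X) == r setT]]).
  case/existsP => X /and3P [p1 p2 /eqP e].
  apply: (glue_bd (A := X)) => //.
    apply: IH; first exact: restr_matroid.
      by apply: restr_circ.
    by rewrite /restr setTI; clear -p2 e hk; lia.
  apply: IH; first exact: restr_matroid.
    by apply: restr_circ.
  by rewrite /restr setTI; clear -p1 e hk; lia.
rewrite negb_exists => /forallP Hn.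
have hcon : connected r.
  move=> X e; have := Hn X; rewrite e eqxx andbT negb_and -!leqNgt !leqn0.
  by case/orP => /eqP ->; [left|right].
case: (boolP [exists C : {set T}, is_circuit r C && (1 < #|C|)]).
  case/existsP => C0 /andP [c0 b0].
  case: (@arg_maxnP _ C0 (fun C => is_circuit r C) (fun C => #|C|) c0) => C cC mx.
  have mx' : forall W, is_circuit r W -> #|W| <= #|C| by move=> W cW; apply: mx.
  have b : 1 < #|C| by apply: leq_trans b0 (mx _ c0).
  have hCn := hC _ cC.
  have hcc := contr_circ hr hcon cC b mx'.
  have n0 : 0 < n by clear -b hCn; lia.
  have := IHo _ (contr_matroid hr C) (fun D cD => leq_trans (hcc D cD) (_ : #|C|.-1 <= n)) n0.
  move/(_ ltac:(clear -hCn; lia)) => hd.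
  apply: bd_mono (contr_bd hr hd).
  have [rC _] := circ_rank hr cC.
  rewrite rC; clear -hCn; nia.
rewrite negb_exists => /forallP Hc.
have c1 : forall W, is_circuit r W -> #|W| = 1.
  move=> W cW; have := Hc W; rewrite cW /=; have [_ ] := circ_rank hr cW; clear; lia.
have hT : r setT = 1.
  have [I [_ hI eI]] := max_indep hr setT.
  have I0 : 0 < #|I|.
    by rewrite -hI eI.
  case/card_gt0P: I0 => e eI'.
  have re : r [set e] = 1.
    by rewrite (indep_sub hr (_ : [set e] \subset I) hI) ?cards1 // sub1set.
  have sp : r [set e] + r (~: [set e]) <= r setT.
    rewrite -(setUCr [set e]); apply: (sep_le hr); first by rewrite setICr.
    move=> W cW _; have := c1 W cW; move/eqP/cards1P => [w ->].
    case: (boolP (w == e)) => [/eqP ->|ne]; first by left.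
    by right; rewrite sub1set !inE.
  have sp2 : r setT <= r [set e] + r (~: [set e]).
    by rewrite -(setUCr [set e]); apply: (rU hr).
  case: (hcon [set e]); first by clear -sp sp2; lia.
    by rewrite re.
  by move=> h; clear -h re sp sp2; lia.
have hd0 : branch_depth_le (contr r setT) 0.
  apply: trivial_bd; first exact: contr_matroid.
  by rewrite /contr setUid subnn.
apply: bd_mono (contr_bd hr hd0).
by rewrite hT; clear; lia.
Qed.

Lemma main_aux n : forall r, is_matroid_rank r -> (forall C, is_circuit r C -> #|C| <= n.+1) ->
  branch_depth_le r (n.+1 ^ 2).
Proof.
elim: n => [|n IH].
  apply: inner => r' _ _ h; by [].
apply: inner => r' hr' hc _; exact: IH.
Qed.

End Final.

Theorem mainTheorem16 (T : finType) (r : {set T} -> nat) :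
  is_matroid_rank r ->
  (exists C : {set T}, is_circuit r C) ->
  branch_depth_le r (max_circuit_size r ^ 2).
Proof.
move=> hr [C0 c0].
have h1 : forall C, is_circuit r C -> #|C| <= max_circuit_size r.
  by move=> C cC; rewrite /max_circuit_size; apply: (@leq_bigmax_cond _ (fun C => is_circuit r C) (fun C => #|C|) C cC).
have pos : 0 < max_circuit_size r.
  have [_ p] := circ_rank hr c0; exact: leq_trans p (h1 _ c0).
have := @main_aux T (max_circuit_size r).-1 r hr.
by rewrite prednK //; apply.
Qed.
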